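(* Let $N>0$, $m>0$, $F>0$, $\alpha>0$, $w>0$, $\tau\in(0,1)$, $g\geq 0$, $L_g\geq 0$, and define \[ L=\frac{N\left[(1-\tau)(mL_g+\alpha F)+(mg+F)mN\right]}{\alpha+(Nm-\alpha)\tau},\qquad q=\frac{(1-\tau)(L+L_g-\alpha g)}{\left(Nm+\alpha(1-\tau)\right)(L+L_g)}, \] \[ p=\frac{L+L_g}{L+L_g-\alpha g}\left(mw+\frac{\alpha(1-\tau)w}{N}\right),\qquad \Pi=\left((L+L_g)q+g\right)(p-mw)-Fw . \] Assume $Nm>\alpha$. If \[ F\leq \frac{\alpha\left((L+L_g)q+g\right)L}{(L+L_g)N}, \] then $\Pi\geq 0$.
   Context: These are the symmetric-equilibrium quantities of a monopolistic-competition general equilibrium model: $N$ is the measure of firms, $m$ and $F$ the marginal and fixed labor inputs, $\alpha$ the CARA utility parameter, $w$ the nominal wage, $\tau$ the income tax rate, $g$ the government purchase of each variety, $L_g$ government employment, $L$ private employment, $q$ per-capita consumption of each variety, $p$ the common price, and $\Pi$ the profit of each firm. *)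

(* Defs.v *)
From mathcomp Require Import all_boot all_order all_algebra.

(* Main.v *)
Require Import Defs.
From mathcomp Require Import all_boot all_order all_algebra.
From mathcomp Require Import ring lra.
Import Order.TTheory GRing.Theory Num.Theory.
Local Open Scope ring_scope.

Theorem proposition4 (R : realFieldType) (N m F alpha w tau g Lg : R) :
  0 < N -> 0 < m -> 0 < F -> 0 < alpha -> 0 < w ->
  0 < tau -> tau < 1 -> 0 <= g -> 0 <= Lg ->
  alpha < N * m ->
  let L := N * ((1 - tau) * (m * Lg + alpha * F) + (m * g + F) * m * N)
           / (alpha + (N * m - alpha) * tau) in
  let q := (1 - tau) * (L + Lg - alpha * g)
           / ((N * m + alpha * (1 - tau)) * (L + Lg)) in
  let p := (L + Lg) / (L + Lg - alpha * g)
           * (m * w + alpha * (1 - tau) * w / N) in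
  let Pi := ((L + Lg) * q + g) * (p - m * w) - F * w in
  F <= alpha * ((L + Lg) * q + g) * L / ((L + Lg) * N) ->
  0 <= Pi.
Proof.
move=> hN hm hF ha hw ht ht1 hg hLg hNm L q p Pi hyp.
set E := alpha + (N * m - alpha) * tau.
set D := N * m + alpha * (1 - tau).
have hE : 0 < E by rewrite /E; nra.
have hEN : E < N * m by rewrite /E; nra.
have hD : 0 < D by rewrite /D; nra.
have hLE : L * E = N * m * (1 - tau) * Lg + N * N * m * m * g + F * N * D.
  rewrite /L /D /E divfK; [ring | exact: lt0r_neq0].
have hL : 0 < L.
  have a1 : 0 <= N * m * (1 - tau) * Lg.
    by rewrite mulr_ge0 // !mulr_ge0 // ?subr_ge0 ?ltW.
  have a2 : 0 <= N * N * m * m * g by rewrite !mulr_ge0 // ltW.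
  have a3 : 0 < F * N * D by rewrite !mulr_gt0.
  have : 0 < L * E by rewrite hLE; lra.
  by rewrite pmulr_lgt0.
set S := L + Lg.
have hS : 0 < S by rewrite /S; lra.
have hLg2 : N * m * g <= L.
  have : N * m * g * E <= L * E.
    rewrite hLE.
    have a1 : 0 <= N * m * (1 - tau) * Lg.
      by rewrite mulr_ge0 // !mulr_ge0 // ?subr_ge0 ?ltW.
    have a3 : 0 < F * N * D by rewrite !mulr_gt0.
    have a4 : N * m * g * E <= N * N * m * m * g.
      have -> : N * N * m * m * g = N * m * g * (N * m) by ring.
      apply: ler_wpM2l; last exact: ltW.
      by rewrite mulr_ge0 // mulr_ge0 // ltW.
    lra.
  by rewrite ler_pM2r.
have hSa : 0 < S - alpha * g.
  rewrite /S; have [->|g0] := eqVneq g 0; first lra.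
  have gp : 0 < g by rewrite lt_neqAle eq_sym g0 hg.
  have : alpha * g < N * m * g by rewrite ltr_pM2r.
  lra.
set X := (1 - tau) * S + g * N * m.
have hX : 0 <= X by rewrite /X; nra.
have hq : S * q + g = X / D.
  rewrite /q -/S -/D /X /D; field; apply/andP; split; apply: lt0r_neq0 => //.
have hp : p - m * w = w * alpha * X / (N * (S - alpha * g)).
  rewrite /p -/S /X; field; apply/andP; split; apply: lt0r_neq0 => //.
rewrite /Pi -/S hq hp.
rewrite -/S hq in hyp.
have h1 : F * (D * S * N) <= alpha * X * L.
  have e : alpha * (X / D) * L / (S * N) = alpha * X * L / (D * S * N).
    field; do !(apply/andP; split); apply: lt0r_neq0 => //.
  by rewrite -ler_pdivlMr ?mulr_gt0 // -e.
have hES : E * S - alpha * X = N * m * (tau * S - alpha * g).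
  rewrite /E /X; ring.
have k1 : N * m * (L * (tau * S - alpha * g)) <= N * m * (S * ((1 - tau) * Lg + N * m * g)).
  have -> : N * m * (L * (tau * S - alpha * g)) = L * (N * m * (tau * S - alpha * g)) by ring.
  rewrite -hES.
  have -> : L * (E * S - alpha * X) = (L * E) * S - alpha * X * L by ring.
  rewrite hLE.
  have -> : (N * m * (1 - tau) * Lg + N * N * m * m * g + F * N * D) * S - alpha * X * L
     = N * m * (S * ((1 - tau) * Lg + N * m * g)) + (F * (D * S * N) - alpha * X * L) by ring.
  lra.
have k2 : L * (tau * S - alpha * g) <= S * ((1 - tau) * Lg + N * m * g).
  by rewrite -(ler_pM2l (mulr_gt0 hN hm)).
have key : L * (S - alpha * g) <= X * S.
  rewrite -subr_ge0.
  have -> : X * S - L * (S - alpha * g) = S * ((1 - tau) * Lg + N * m * g) - L * (tau * S - alpha * g) by rewrite /X /S; ring.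
  by rewrite subr_ge0.
have e2 : X / D * (w * alpha * X / (N * (S - alpha * g))) = (alpha * X / (D * N)) * (X / (S - alpha * g)) * w.
  field; do !(apply/andP; split); apply: lt0r_neq0 => //.
have e3 : alpha * (X / D) * L / (S * N) = (alpha * X / (D * N)) * (L / S).
  field; do !(apply/andP; split); apply: lt0r_neq0 => //.
rewrite e3 in hyp; rewrite e2.
have hY : (alpha * X / (D * N)) * (L / S) <= (alpha * X / (D * N)) * (X / (S - alpha * g)).
  apply: ler_wpM2l.
    by apply: divr_ge0; [apply: mulr_ge0 => //; exact: ltW | apply: mulr_ge0; exact: ltW].
  by rewrite ler_pdivrMr // mulrAC ler_pdivlMr.
rewrite subr_ge0 ler_pM2r //; exact: le_trans hyp hY.
Qed.
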